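(* Let $\Sigma_\pm\subset\mathbb C^3_{(B,A,r)}$ be the set of parameters for which the monodromy $\mathrm{Mon}$ fixes the point $\pm i$. Then $\Sigma_\pm$ consists exactly of those parameters for which $\mathrm{Mon}$ is a parabolic or identical Möbius transformation fixing $\pm i$. Moreover, every parameter $(B,A,r)$ for which $\mathrm{Mon}$ is parabolic or the identity lies in $\Sigma_+\cup\Sigma_-$.
   Context: For complex parameters $(B,A,r)$ with $r\neq0$ set $\omega=\frac1{2r}$, $l=2Br$, $\mu=Ar$, and consider the Riccati equation $\frac{d\Phi}{dz}=z^{-2}\left((lz+\mu(z^2+1))\Phi-\frac{z}{2i\omega}(\Phi^2-1)\right)$ on the Riemann sphere, $z\in\mathbb C^*$. It is the projectivization of a linear system, so its monodromy transformation $\mathrm{Mon}$, acting on initial conditions $\Phi(1)\in\overline{\mathbb C}$ by analytic continuation of solutions along the positively oriented unit circle in the $z$-line, is a Möbius transformation of the Riemann sphere. A Möbius transformation is parabolic if it is not the identity and has exactly one fixed point. *)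

(* Defs.v *)
From Stdlib Require Import Reals.
From Coquelicot Require Import Coquelicot.
Open Scope R_scope.

Definition omega (r : C) : C := (/ (2 * r))%C.
Definition ell (B r : C) : C := (2 * B * r)%C.
Definition mu (A r : C) : C := (A * r)%C.

Definition riccati_rhs (B A r z Phi : C) : C :=
  (/ (z * z) * ((ell B r * z + mu A r * (z * z + 1)) * Phi
                - z / (2 * Ci * omega r) * (Phi * Phi - 1)))%C.

(* Linear system (u,v)' = M(z) (u,v) whose projectivization Phi = u/v is the
   Riccati equation:  M = [[b, k],[k, 0]] with
   b = (l z + mu (z^2+1))/z^2, k = 1/(2 i omega z).
   Indeed (u/v)' = k + b Phi - k Phi^2 = riccati_rhs. *)
Definition sys_b (B A r z : C) : C :=
  ((ell B r * z + mu A r * (z * z + 1)) / (z * z))%C.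
Definition sys_k (r z : C) : C := (/ (2 * Ci * omega r * z))%C.

Definition circ (t : R) : C := (cos t, sin t).

Record mat2 := Mat2 { m11 : C; m12 : C; m21 : C; m22 : C }.

(* (u,v) : R -> C*C solves the linear system pulled back along z = e^{it}:
   d/dt (u,v) = z'(t) M(z(t)) (u,v),  z'(t) = i e^{it}. *)
Definition solves_sys (B A r : C) (u v : R -> C) : Prop :=
  forall t, 0 <= t <= 2 * PI ->
    is_derive u t (Ci * circ t * (sys_b B A r (circ t) * u t + sys_k r (circ t) * v t))%C /\
    is_derive v t (Ci * circ t * (sys_k r (circ t) * u t))%C.

Definition is_monodromy_matrix (B A r : C) (T : mat2) : Prop :=
  exists u1 v1 u2 v2 : R -> C,
    solves_sys B A r u1 v1 /\ solves_sys B A r u2 v2 /\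
    u1 0 = 1%C /\ v1 0 = 0%C /\ u2 0 = 0%C /\ v2 0 = 1%C /\
    m11 T = u1 (2 * PI) /\ m21 T = v1 (2 * PI) /\
    m12 T = u2 (2 * PI) /\ m22 T = v2 (2 * PI).

(* Riemann sphere: Some z for z in C, None for infinity. *)
Definition sphere := option C.

Definition mobius (T : mat2) (p : sphere) : sphere :=
  match p with
  | Some z =>
      let den := (m21 T * z + m22 T)%C in
      match Req_EM_T (fst den) 0, Req_EM_T (snd den) 0 with
      | left _, left _ => None
      | _, _ => Some ((m11 T * z + m12 T) / den)%C
      end
  | None =>
      match Req_EM_T (fst (m21 T)) 0, Req_EM_T (snd (m21 T)) 0 with
      | left _, left _ => None
      | _, _ => Some (m11 T / m21 T)%C
      end
  end.

Definition fixes (f : sphere -> sphere) (p : sphere) : Prop := f p = p.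
Definition is_identity (f : sphere -> sphere) : Prop := forall p, f p = p.
Definition is_parabolic (f : sphere -> sphere) : Prop :=
  ~ is_identity f /\ exists p, fixes f p /\ forall q, fixes f q -> q = p.

Definition ip : C := Ci.
Definition im : C := (- Ci)%C.

(* Main.v *)
Require Import Defs.
From Stdlib Require Import Reals Lra Classical.
From Coquelicot Require Import Coquelicot.
Open Scope R_scope.

Lemma rd_eq (f : R -> R) x l1 l2 : is_derive f x l1 -> l1 = l2 -> is_derive f x l2.
Proof. intros H ->; exact H. Qed.

Lemma rd_mult (f g : R -> R) x df dg : is_derive f x df -> is_derive g x dg ->
  is_derive (fun t => f t * g t) x (df * g x + f x * dg).
Proof. intros H1 H2. exact (is_derive_mult f g x df dg H1 H2 Rmult_comm). Qed.

Lemma rd_plus (f g : R -> R) x df dg : is_derive f x df -> is_derive g x dg ->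
  is_derive (fun t => f t + g t) x (df + dg).
Proof. intros H1 H2. exact (is_derive_plus f g x df dg H1 H2). Qed.

Lemma rd_minus (f g : R -> R) x df dg : is_derive f x df -> is_derive g x dg ->
  is_derive (fun t => f t - g t) x (df - dg).
Proof. intros H1 H2. exact (is_derive_minus f g x df dg H1 H2). Qed.

Lemma is_derive_C_intro (f : R -> C) x (l : C) :
  is_derive (fun t => fst (f t)) x (fst l) ->
  is_derive (fun t => snd (f t)) x (snd l) -> is_derive f x l.
Proof.
  intros H1 H2. unfold is_derive in *.
  pose proof (filterdiff_comp_2 (K:=R_AbsRing) (U:=R_NormedModule) (V:=R_NormedModule)
     (W:=prod_NormedModule R_AbsRing R_NormedModule R_NormedModule)
     (fun t => fst (f t)) (fun t => snd (f t)) (fun a b => (a,b)) _ _ (fun a b => (a,b)) H1 H2) as H.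
  eapply filterdiff_ext. 2: eapply filterdiff_ext_lin. 2: apply H.
  - intros y; simpl. destruct (f y); reflexivity.
  - apply filterdiff_linear. apply is_linear_prod; [apply is_linear_fst|apply is_linear_snd].
  - intros y. destruct l; reflexivity.
Qed.

Lemma is_derive_C_fst (f : R -> C) x (l : C) :
  is_derive f x l -> is_derive (fun t => fst (f t)) x (fst l).
Proof.
  intros H. unfold is_derive in *.
  eapply filterdiff_ext_lin.
  - apply (filterdiff_comp f (fun p : prod_NormedModule R_AbsRing R_NormedModule R_NormedModule => fst p) _ (fun p : prod_NormedModule R_AbsRing R_NormedModule R_NormedModule => fst p) H).
    apply filterdiff_linear. apply is_linear_fst.
  - intros y. reflexivity.
Qed.

Lemma is_derive_C_snd (f : R -> C) x (l : C) :
  is_derive f x l -> is_derive (fun t => snd (f t)) x (snd l).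
Proof.
  intros H. unfold is_derive in *.
  eapply filterdiff_ext_lin.
  - apply (filterdiff_comp f (fun p : prod_NormedModule R_AbsRing R_NormedModule R_NormedModule => snd p) _ (fun p : prod_NormedModule R_AbsRing R_NormedModule R_NormedModule => snd p) H).
    apply filterdiff_linear. apply is_linear_snd.
  - intros y. reflexivity.
Qed.

Lemma cd_eq (f : R -> C) x (l1 l2 : C) : is_derive f x l1 -> l1 = l2 -> is_derive f x l2.
Proof. intros H ->; exact H. Qed.

Lemma cd_mult (f g : R -> C) x (df dg : C) : is_derive f x df -> is_derive g x dg ->
  is_derive (fun t => (f t * g t)%C) x (df * g x + f x * dg)%C.
Proof.
  intros H1 H2.
  pose proof (is_derive_C_fst _ _ _ H1). pose proof (is_derive_C_snd _ _ _ H1).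
  pose proof (is_derive_C_fst _ _ _ H2). pose proof (is_derive_C_snd _ _ _ H2).
  apply is_derive_C_intro; simpl.
  - eapply rd_eq. apply rd_minus; apply rd_mult; eassumption. simpl. ring.
  - eapply rd_eq. apply rd_plus; apply rd_mult; eassumption. simpl. ring.
Qed.

Lemma cd_plus (f g : R -> C) x (df dg : C) : is_derive f x df -> is_derive g x dg ->
  is_derive (fun t => (f t + g t)%C) x (df + dg)%C.
Proof.
  intros H1 H2.
  pose proof (is_derive_C_fst _ _ _ H1). pose proof (is_derive_C_snd _ _ _ H1).
  pose proof (is_derive_C_fst _ _ _ H2). pose proof (is_derive_C_snd _ _ _ H2).
  apply is_derive_C_intro; simpl; apply rd_plus; assumption.
Qed.

Lemma cd_minus (f g : R -> C) x (df dg : C) : is_derive f x df -> is_derive g x dg ->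
  is_derive (fun t => (f t - g t)%C) x (df - dg)%C.
Proof.
  intros H1 H2.
  pose proof (is_derive_C_fst _ _ _ H1). pose proof (is_derive_C_snd _ _ _ H1).
  pose proof (is_derive_C_fst _ _ _ H2). pose proof (is_derive_C_snd _ _ _ H2).
  apply is_derive_C_intro; simpl.
  - eapply rd_eq. apply rd_plus. eassumption. apply (is_derive_opp (fun t => fst (g t))). eassumption. reflexivity.
  - eapply rd_eq. apply rd_plus. eassumption. apply (is_derive_opp (fun t => snd (g t))). eassumption. reflexivity.
Qed.

Lemma cd_const (c : C) (x : R) : is_derive (fun _ : R => c) x (RtoC 0).
Proof. apply is_derive_C_intro; simpl; apply (is_derive_const (K:=R_AbsRing) (V:=R_NormedModule)). Qed.

Lemma cd_refl (f : R -> C) x (df : C) : is_derive f (2*PI - x) df ->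
  is_derive (fun t => f (2*PI - t)) x (- df)%C.
Proof.
  intros H.
  pose proof (is_derive_C_fst _ _ _ H). pose proof (is_derive_C_snd _ _ _ H).
  assert (Hg : is_derive (fun t : R => 2*PI - t) x (-1)).
  { eapply rd_eq. apply rd_minus. apply is_derive_const. apply is_derive_id. simpl. unfold zero, one; simpl. ring. }
  apply is_derive_C_intro; simpl.
  - eapply rd_eq. apply (is_derive_comp (fun t => fst (f t))). eassumption. exact Hg. simpl. unfold scal; simpl. unfold mult; simpl. ring.
  - eapply rd_eq. apply (is_derive_comp (fun t => snd (f t))). eassumption. exact Hg. simpl. unfold scal; simpl. unfold mult; simpl. ring.
Qed.


Lemma rd_comp (f g : R -> R) x df dg : is_derive f (g x) df -> is_derive g x dg ->
  is_derive (fun t => f (g t)) x (dg * df).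
Proof. intros H1 H2. exact (is_derive_comp f g x df dg H1 H2). Qed.

Definition cexp (w : C) : C := (exp (fst w) * cos (snd w), exp (fst w) * sin (snd w)).

Lemma cd_cexp (g : R -> C) x (dg : C) : is_derive g x dg ->
  is_derive (fun t => cexp (g t)) x (dg * cexp (g x))%C.
Proof.
  intros H.
  pose proof (is_derive_C_fst _ _ _ H) as H1. pose proof (is_derive_C_snd _ _ _ H) as H2.
  pose proof (rd_comp exp _ _ _ _ (is_derive_exp _) H1) as He.
  pose proof (rd_comp cos _ _ _ _ (is_derive_cos _) H2) as Hc.
  pose proof (rd_comp sin _ _ _ _ (is_derive_sin _) H2) as Hs.
  apply is_derive_C_intro; unfold cexp; simpl.
  - eapply rd_eq. apply rd_mult; eassumption. simpl. ring.
  - eapply rd_eq. apply rd_mult; eassumption. simpl. ring.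
Qed.

Lemma cexp_neq0 w : cexp w <> 0%C.
Proof.
  unfold cexp. intros Heq. injection Heq as E1 E2.
  pose proof (exp_pos (fst w)). pose proof (sin2_cos2 (snd w)). unfold Rsqr in *.
  assert (cos (snd w) = 0). { apply Rmult_eq_reg_l with (exp (fst w)); lra. }
  assert (sin (snd w) = 0). { apply Rmult_eq_reg_l with (exp (fst w)); lra. }
  nra.
Qed.

Lemma cd_circ x : is_derive circ x (Ci * circ x)%C.
Proof.
  apply is_derive_C_intro; unfold circ; simpl.
  - eapply rd_eq. apply is_derive_cos. simpl; ring.
  - eapply rd_eq. apply is_derive_sin. simpl; ring.
Qed.

Lemma cd_circ_neg x : is_derive (fun t => circ (- t)) x (- (Ci * circ (- x)))%C.
Proof.
  assert (Hg : is_derive (fun t : R => - t) x (-1)).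
  { eapply rd_eq. apply (is_derive_opp (fun t : R => t)). apply is_derive_id. reflexivity. }
  apply is_derive_C_intro; unfold circ; simpl.
  - eapply rd_eq. apply (rd_comp cos). apply is_derive_cos. exact Hg. simpl; ring.
  - eapply rd_eq. apply (rd_comp sin). apply is_derive_sin. exact Hg. simpl; ring.
Qed.

Lemma cd_RtoC x : is_derive (fun t : R => RtoC t) x (RtoC 1).
Proof.
  apply is_derive_C_intro; simpl.
  - apply (is_derive_id (K:=R_AbsRing)).
  - apply (is_derive_const (K:=R_AbsRing) (V:=R_NormedModule)).
Qed.

Lemma circ_mul_neg t : (circ t * circ (- t) = 1)%C.
Proof.
  unfold circ. rewrite cos_neg, sin_neg. pose proof (sin2_cos2 t). unfold Rsqr in *.
  apply injective_projections; simpl; nra.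
Qed.

Lemma circ_neq0 t : circ t <> 0%C.
Proof.
  intros E. pose proof (circ_mul_neg t) as H. rewrite E in H.
  injection H as H1. lra.
Qed.

Lemma circ_inv t : Cinv (circ t) = circ (- t).
Proof.
  pose proof (circ_mul_neg t) as H. pose proof (circ_neq0 t).
  rewrite <- (Cmult_1_l (Cinv (circ t))). rewrite <- H.
  field. auto.
Qed.

Lemma circ_2PI_minus t : circ (2*PI - t) = circ (- t).
Proof.
  unfold circ. rewrite cos_neg, sin_neg, cos_minus, sin_minus, cos_2PI, sin_2PI.
  apply injective_projections; simpl; ring.
Qed.

Lemma circ_neg_2PI_minus t : circ (- (2*PI - t)) = circ t.
Proof.
  unfold circ. rewrite cos_neg, sin_neg, cos_minus, sin_minus, cos_2PI, sin_2PI.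
  apply injective_projections; simpl; ring.
Qed.


Definition alpha B A r t : C := (Ci * (ell B r + mu A r * (circ t + circ (- t))))%C.

Lemma Ci_neq0 : Ci <> 0%C.
Proof. intros H. apply (f_equal snd) in H. simpl in H. lra. Qed.

Lemma C2_neq0 : (2 : C) <> 0%C.
Proof. intros H. apply (f_equal fst) in H. simpl in H. lra. Qed.

Lemma rhs_b B A r t : (Ci * circ t * sys_b B A r (circ t) = alpha B A r t)%C.
Proof.
  unfold sys_b, alpha. rewrite <- circ_inv. pose proof (circ_neq0 t). field. auto.
Qed.

Lemma rhs_k (r : C) (t : R) : r <> 0%C -> (Ci * circ t * sys_k r (circ t) = r)%C.
Proof.
  intros Hr. unfold sys_k, omega. pose proof (circ_neq0 t). pose proof Ci_neq0. pose proof C2_neq0.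
  field. repeat split; auto.
Qed.

Lemma sol_deriv (B A r : C) (u v : R -> C) (t : R) : r <> 0%C -> solves_sys B A r u v -> 0 <= t <= 2*PI ->
  is_derive u t (alpha B A r t * u t + r * v t)%C /\ is_derive v t (r * u t)%C.
Proof.
  intros Hr Hs Ht. destruct (Hs t Ht) as [Hu Hv]. split.
  - eapply cd_eq. exact Hu.
    transitivity ((Ci * circ t * sys_b B A r (circ t)) * u t + (Ci * circ t * sys_k r (circ t)) * v t)%C.
    ring. rewrite rhs_b, (rhs_k r t Hr). reflexivity.
  - eapply cd_eq. exact Hv.
    transitivity ((Ci * circ t * sys_k r (circ t)) * u t)%C.
    ring. rewrite (rhs_k r t Hr). reflexivity.
Qed.

Lemma alpha_sym B A r t : alpha B A r (2*PI - t) = alpha B A r t.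
Proof. unfold alpha. rewrite circ_2PI_minus, circ_neg_2PI_minus. ring. Qed.


Lemma cd_zero (f : R -> C) t : is_derive f t (RtoC 0) -> is_derive f t zero.
Proof. intros H; exact H. Qed.

Lemma mono_sym (B A r : C) (T : mat2) : r <> 0%C -> is_monodromy_matrix B A r T -> m12 T = m21 T.
Proof.
  intros Hr (u1&v1&u2&v2&H1&H2&Hu10&Hv10&Hu20&Hv20&E11&E21&E12&E22).
  pose (f := fun t => (u1 t * u2 (2*PI - t)%R + v1 t * v2 (2*PI - t)%R)%C).
  assert (Hd : forall t, 0 <= t <= 2*PI -> is_derive f t zero).
  { intros t Ht. apply cd_zero.
    assert (Ht' : 0 <= 2*PI - t <= 2*PI) by lra.
    destruct (sol_deriv B A r u1 v1 t Hr H1 Ht) as [Da Db].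
    destruct (sol_deriv B A r u2 v2 (2*PI - t) Hr H2 Ht') as [Dc Dd].
    eapply cd_eq. unfold f.
    apply cd_plus; apply cd_mult; try eassumption; apply cd_refl; eassumption.
    rewrite alpha_sym. ring. }
  pose proof (eq_is_derive f 0 (2*PI) Hd) as E.
  assert (HP : 0 < 2*PI) by (pose proof PI_RGT_0; lra).
  specialize (E HP). unfold f in E.
  rewrite Rminus_0_r in E. replace (2*PI - 2*PI) with 0 in E by ring.
  rewrite Hu10, Hv10, Hu20, Hv20 in E. rewrite E12, E21.
  transitivity (1 * u2 (2 * PI)%R + 0 * v2 (2 * PI)%R)%C. ring.
  rewrite E. ring.
Qed.

Definition Psi (B A r : C) (t : R) : C :=
  (- Ci * ell B r * RtoC t + mu A r * (circ (- t) - circ t))%C.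

Lemma mono_det (B A r : C) (T : mat2) : r <> 0%C -> is_monodromy_matrix B A r T ->
  (m11 T * m22 T - m12 T * m21 T)%C <> 0%C.
Proof.
  intros Hr (u1&v1&u2&v2&H1&H2&Hu10&Hv10&Hu20&Hv20&E11&E21&E12&E22).
  pose (f := fun t => ((u1 t * v2 t - u2 t * v1 t) * cexp (Psi B A r t))%C).
  assert (Hd : forall t, 0 <= t <= 2*PI -> is_derive f t zero).
  { intros t Ht. apply cd_zero.
    destruct (sol_deriv B A r u1 v1 t Hr H1 Ht) as [Da Db].
    destruct (sol_deriv B A r u2 v2 t Hr H2 Ht) as [Dc Dd].
    assert (DP : is_derive (Psi B A r) t (- alpha B A r t)%C).
    { eapply cd_eq. unfold Psi. apply cd_plus; apply cd_mult.
      apply cd_const. apply cd_RtoC. apply cd_const. apply cd_minus. apply cd_circ_neg. apply cd_circ.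
      unfold alpha. ring. }
    eapply cd_eq. unfold f.
    apply cd_mult. apply cd_minus; apply cd_mult; eassumption. apply cd_cexp. exact DP.
    cbv beta. ring. }
  pose proof (eq_is_derive f 0 (2*PI) Hd) as E.
  assert (HP : 0 < 2*PI) by (pose proof PI_RGT_0; lra).
  specialize (E HP). unfold f in E.
  rewrite Hu10, Hv10, Hu20, Hv20 in E. rewrite E11, E12, E21, E22.
  intros Z. rewrite Z in E.
  apply (cexp_neq0 (Psi B A r 0)).
  transitivity ((1 * 1 - 0 * 0) * cexp (Psi B A r 0))%C. ring.
  rewrite E. ring.
Qed.


Lemma C_eq0_of (w : C) : fst w = 0 -> snd w = 0 -> w = 0%C.
Proof. destruct w; simpl; intros -> ->; reflexivity. Qed.

Lemma mob_Some T z :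
  ((m21 T * z + m22 T)%C = 0%C /\ mobius T (Some z) = None) \/
  ((m21 T * z + m22 T)%C <> 0%C /\
   mobius T (Some z) = Some ((m11 T * z + m12 T) / (m21 T * z + m22 T))%C).
Proof.
  unfold mobius; cbv zeta.
  destruct (Req_EM_T (fst (m21 T * z + m22 T)%C) 0) as [e1|n1];
  destruct (Req_EM_T (snd (m21 T * z + m22 T)%C) 0) as [e2|n2].
  - left. split; [apply C_eq0_of; auto | reflexivity].
  - right. split; [intros E; apply n2; rewrite E; reflexivity | reflexivity].
  - right. split; [intros E; apply n1; rewrite E; reflexivity | reflexivity].
  - right. split; [intros E; apply n1; rewrite E; reflexivity | reflexivity].
Qed.

Lemma mob_None T :
  (m21 T = 0%C /\ mobius T None = None) \/
  (m21 T <> 0%C /\ mobius T None = Some (m11 T / m21 T)%C).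
Proof.
  unfold mobius.
  destruct (Req_EM_T (fst (m21 T)) 0) as [e1|n1];
  destruct (Req_EM_T (snd (m21 T)) 0) as [e2|n2].
  - left. split; [apply C_eq0_of; auto | reflexivity].
  - right. split; [intros E; apply n2; rewrite E; reflexivity | reflexivity].
  - right. split; [intros E; apply n1; rewrite E; reflexivity | reflexivity].
  - right. split; [intros E; apply n1; rewrite E; reflexivity | reflexivity].
Qed.

Lemma fix_Some T z : fixes (mobius T) (Some z) <->
  ((m21 T * z + m22 T)%C <> 0%C /\ (m11 T * z + m12 T - z * (m21 T * z + m22 T))%C = 0%C).
Proof.
  unfold fixes. destruct (mob_Some T z) as [[H1 H2]|[H1 H2]]; rewrite H2.
  - split. discriminate. intros [H _]. contradiction.
  - split.
    + intros E. injection E as E. split; auto. rewrite <- E at 2. field. auto.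
    + intros [_ E]. f_equal.
      transitivity ((m11 T * z + m12 T - z * (m21 T * z + m22 T)) / (m21 T * z + m22 T) + z)%C.
      field. auto. rewrite E. field. auto.
Qed.

Lemma fix_None T : fixes (mobius T) None <-> m21 T = 0%C.
Proof.
  unfold fixes. destruct (mob_None T) as [[H1 H2]|[H1 H2]]; rewrite H2.
  - split; auto.
  - split. discriminate. intros; contradiction.
Qed.

Lemma Cmult_eq0 (x y : C) : (x * y)%C = 0%C -> x = 0%C \/ y = 0%C.
Proof.
  intros H. destruct (classic (x = 0%C)) as [Hx|Hx]; [left; auto|right].
  transitivity (/ x * (x * y))%C. field. auto. rewrite H. ring.
Qed.

Lemma sq_m1 (z : C) : (z * z)%C = (-1)%C -> z = Ci \/ z = (- Ci)%C.
Proof.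
  intros H.
  assert (E : ((z - Ci) * (z + Ci))%C = 0%C).
  { transitivity (z * z - Ci * Ci)%C. ring. rewrite H.
    apply injective_projections; simpl; ring. }
  destruct (Cmult_eq0 _ _ E) as [E1|E1]; [left|right].
  - transitivity ((z - Ci) + Ci)%C. ring. rewrite E1. ring.
  - transitivity ((z + Ci) - Ci)%C. ring. rewrite E1. ring.
Qed.


Lemma part1 T s : m12 T = m21 T -> (s = ip \/ s = im) ->
  fixes (mobius T) (Some s) ->
  is_parabolic (mobius T) \/ is_identity (mobius T).
Proof.
  intros Hsym Hs Hfix.
  assert (S : (s * s + 1)%C = 0%C).
  { destruct Hs as [->| ->]; unfold ip, im; apply injective_projections; simpl; ring. }
  assert (Hs0 : s <> 0%C).
  { intros E. rewrite E in S. apply (f_equal fst) in S. simpl in S. lra. }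
  pose proof Hfix as Hf. apply fix_Some in Hf. destruct Hf as [Hden Es].
  rewrite Hsym in Es.
  destruct (classic (m21 T = 0%C)) as [Hc|Hc].
  - right. intros p. destruct p as [z|].
    + apply fix_Some. rewrite Hc in Hden, Es |- *. rewrite Hsym, Hc.
      assert (Hd : m22 T <> 0%C). { intros E. apply Hden. rewrite E. ring. }
      assert (Ha : (m11 T - m22 T)%C = 0%C).
      { assert (E2 : (s * (m11 T - m22 T))%C = 0%C).
        { rewrite <- Es. ring. }
        destruct (Cmult_eq0 _ _ E2) as [E3|E3]; [contradiction|exact E3]. }
      split. intros E. apply Hd. rewrite <- E. ring.
      transitivity (z * (m11 T - m22 T))%C. ring. rewrite Ha. ring.
    + apply fix_None. exact Hc.
  - left. split.
    + intros Hid. apply Hc. apply fix_None. apply Hid.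
    + exists (Some s). split; [exact Hfix|].
      intros q Hq. destruct q as [z|].
      * apply fix_Some in Hq. destruct Hq as [_ Ez]. rewrite Hsym in Ez.
        set (a := m11 T) in *. set (c := m21 T) in *. set (d := m22 T) in *.
        assert (Hid : (c * (z - s) * (z - s))%C =
           (- (a * z + c - z * (c * z + d)) - z * s * (a * s + c - s * (c * s + d))
            + (s * s + 1) * (c - z * (d - a) - c * s * z))%C) by ring.
        rewrite Ez, Es, S in Hid.
        assert (E0 : (c * ((z - s) * (z - s)))%C = 0%C).
        { rewrite Cmult_assoc. rewrite Hid. ring. }
        destruct (Cmult_eq0 _ _ E0) as [E1|E1]; [contradiction|].
        destruct (Cmult_eq0 _ _ E1) as [E2|E2];
        f_equal; transitivity ((z - s) + s)%C; try ring; rewrite E2; ring.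
      * apply fix_None in Hq. contradiction.
Qed.

Lemma part2 T : m12 T = m21 T -> (m11 T * m22 T - m12 T * m21 T)%C <> 0%C ->
  (is_parabolic (mobius T) \/ is_identity (mobius T)) ->
  fixes (mobius T) (Some ip) \/ fixes (mobius T) (Some im).
Proof.
  intros Hsym Hdet [[Hni [p [Hp Hu]]] | Hid].
  2: { left. apply Hid. }
  rewrite Hsym in Hdet.
  set (a := m11 T) in *. set (c := m21 T) in *. set (d := m22 T) in *.
  destruct p as [z0|].
  - pose proof Hp as Hp'. apply fix_Some in Hp'. destruct Hp' as [Hden0 E0].
    rewrite Hsym in E0. fold a c d in Hden0, E0.
    assert (Hc : c <> 0%C).
    { intros Hc. assert (HN : fixes (mobius T) None) by (apply fix_None; exact Hc).
      apply Hu in HN. discriminate. }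
    assert (Hz0 : z0 <> 0%C).
    { intros Hz. apply Hc. rewrite Hz in E0. rewrite <- E0. ring. }
    set (z1 := (- / z0)%C).
    assert (E1 : (a * z1 + c - z1 * (c * z1 + d))%C = 0%C).
    { transitivity (- (a * z0 + c - z0 * (c * z0 + d)) / (z0 * z0))%C.
      unfold z1. field. auto. rewrite E0. field. auto. }
    assert (Hden1 : (c * z1 + d)%C <> 0%C).
    { intros Hd1. apply Hdet.
      transitivity (a * (c * z1 + d) - c * (a * z1 + c - z1 * (c * z1 + d)) - c * z1 * (c * z1 + d))%C.
      fold a c d. ring. rewrite E1, Hd1. ring. }
    assert (Hf1 : fixes (mobius T) (Some z1)).
    { apply fix_Some. rewrite Hsym. fold a c d. split; auto. }
    apply Hu in Hf1. injection Hf1 as Hf1.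
    assert (Hsq : (z0 * z0)%C = (-1)%C).
    { transitivity (z0 * z1)%C. rewrite Hf1. ring. unfold z1. field. auto. }
    destruct (sq_m1 _ Hsq) as [-> | ->]; [left|right]; exact Hp.
  - apply fix_None in Hp. fold c in Hp.
    assert (Hd : d <> 0%C). { intros E. apply Hdet. rewrite E, Hp. ring. }
    assert (H0 : fixes (mobius T) (Some (RtoC 0))).
    { apply fix_Some. rewrite Hsym. fold a c d. rewrite Hp. split.
      intros E. apply Hd. rewrite <- E. ring. ring. }
    apply Hu in H0. discriminate.
Qed.

Theorem proposition5p5 :
  forall (B A r : C) (T : mat2), r <> 0%C -> is_monodromy_matrix B A r T ->
    (forall s : C, (s = ip \/ s = im) ->
       (fixes (mobius T) (Some s) <->
        ((is_parabolic (mobius T) \/ is_identity (mobius T)) /\ fixes (mobius T) (Some s))))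
    /\
    ((is_parabolic (mobius T) \/ is_identity (mobius T)) ->
       fixes (mobius T) (Some ip) \/ fixes (mobius T) (Some im)).
Proof.
  intros B A r T Hr HM.
  pose proof (mono_sym B A r T Hr HM) as Hsym.
  pose proof (mono_det B A r T Hr HM) as Hdet.
  split.
  - intros s Hs. split.
    + intros Hf. split; [exact (part1 T s Hsym Hs Hf) | exact Hf].
    + intros [_ Hf]. exact Hf.
  - exact (part2 T Hsym Hdet).
Qed.
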